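(* Let $p \geqslant 3$ be a prime and $d \geqslant 1$ with $p^d \geqslant 7$, and let $V$ be a $d$-dimensional vector space over $\mathbb{F}_p$ with basis $\mathbf{b}_1,\ldots,\mathbf{b}_d$. Let $G = \mathrm{Sym}(V)$, let $\mu$ be a primitive element of $\mathbb{F}_p$, and for each $j$ let $g_j \in \mathrm{GL}(V)$ send $\mathbf{b}_j$ to $\mu\mathbf{b}_j$ and fix $\mathbf{b}_l$ for $l \neq j$; let $T = \langle g_1,\ldots,g_d\rangle$ be the group of diagonal matrices with respect to this basis. Let $i \in \{1,\ldots,d\}$ and let $a$ be a positive divisor of $p-1$ with $(p,a) \neq (5,2)$. Then there exists $x \in G$ such that \[ T \cap T^x = \langle g_1,\ldots,g_{i-1}, g_i^{a}, g_{i+1},\ldots,g_d\rangle. \]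
   Context: $\mathrm{GL}(V)$ is regarded as a subgroup of $\mathrm{Sym}(V)$. *)

(* Defs.v *)
From HB Require Import structures.
From mathcomp Require Import all_boot all_order all_algebra all_fingroup.
Set Implicit Arguments. Unset Strict Implicit. Unset Printing Implicit Defensive.
Import GRing.Theory.
Local Open Scope ring_scope.

(* The coordinate space V = F^d (row vectors), with standard basis b_1..b_d
   (indexed by 'I_d, i.e. 0..d-1). *)

Definition diag_scale_fun (F : finFieldType) (d : nat) (u : {unit F}) (j : 'I_d)
  (v : 'rV[F]_d) : 'rV[F]_d :=
  \row_k (if k == j then val u * v 0 k else v 0 k).

Lemma diag_scale_inj (F : finFieldType) (d : nat) (u : {unit F}) (j : 'I_d) :
  injective (diag_scale_fun u j).
Proof.
apply: (can_inj (g := diag_scale_fun (u^-1)%g j)) => v.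
apply/rowP => k; rewrite /diag_scale_fun !mxE.
case: eqP => [->|_] //; rewrite mulrA.
by have := (mulVg u); move/(congr1 val) => /= ->; rewrite mul1r.
Qed.

Definition diag_gen (F : finFieldType) (d : nat) (u : {unit F}) (j : 'I_d)
  : {perm 'rV[F]_d} := perm (@diag_scale_inj F d u j).

Definition diagT (F : finFieldType) (d : nat) (u : {unit F})
  : {set {perm 'rV[F]_d}} :=
  <<[set diag_gen u j | j : 'I_d]>>%g.

Definition diagT_mod (F : finFieldType) (d : nat) (u : {unit F}) (i : 'I_d) (a : nat)
  : {set {perm 'rV[F]_d}} :=
  <<[set (if j == i then (diag_gen u j ^+ a)%g else diag_gen u j) | j : 'I_d]>>%g.

Arguments diagT {F d} u.
Arguments diagT_mod {F d} u i a.

(* Main.v *)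
Require Import Defs.
From HB Require Import structures.
From mathcomp Require Import all_boot all_order all_algebra all_fingroup.
Set Implicit Arguments. Unset Strict Implicit. Unset Printing Implicit Defensive.
Import GRing.Theory.
Local Open Scope ring_scope.

Lemma diag_genE (F : finFieldType) d (u : {unit F}) (j : 'I_d) v :
  diag_gen u j v = \row_k (if k == j then val u * v 0 k else v 0 k).
Proof. by rewrite /diag_gen permE. Qed.

Lemma diag_genXE (F : finFieldType) d (u : {unit F}) (j : 'I_d) n v :
  ((diag_gen u j) ^+ n)%g v = \row_k (if k == j then val u ^+ n * v 0 k else v 0 k).
Proof.
elim: n v => [|n IH] v.
  by rewrite expg0 perm1; apply/rowP => k; rewrite mxE; case: eqP; rewrite ?mul1r.
rewrite expgSr permM IH diag_genE; apply/rowP => k; rewrite !mxE.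
by case: eqP => // _; rewrite exprS mulrA.
Qed.

Lemma prod_diagE (F : finFieldType) d (u : {unit F}) (f : 'I_d -> nat) (r : seq 'I_d) v :
  uniq r ->
  (\prod_(j <- r) (diag_gen u j ^+ f j))%g v =
    \row_k (if k \in r then val u ^+ f k * v 0 k else v 0 k).
Proof.
elim: r v => [|j r IH] v /=.
  by move=> _; rewrite big_nil perm1; apply/rowP => k; rewrite mxE.
case/andP => jr ur; rewrite big_cons permM IH // diag_genXE.
apply/rowP => k; rewrite !mxE in_cons.
case: (eqVneq k j) => [->|kj] /=; first by rewrite (negbTE jr).
idtac.
by [].
Qed.

Lemma memG (F : finFieldType) d (u : {unit F}) (e : 'I_d -> nat) (s : {perm 'rV[F]_d}) :
  s \in <<[set (diag_gen u j ^+ e j)%g | j : 'I_d]>>%g <->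
  exists m : 'I_d -> nat, forall v, s v = \row_k (val u ^+ (e k * m k) * v 0 k).
Proof.
split.
  case/gen_prodgP => n [c Hc ->].
  elim: n c Hc => [|n IH] c Hc.
    exists (fun _ => 0%N) => v; rewrite big_ord0 perm1; apply/rowP => k.
    by rewrite mxE muln0 expr0 mul1r.
  rewrite big_ord_recr /=.
  have [m Hm] := IH (fun i => c (widen_ord (leqnSn n) i)) (fun i => Hc _).
  have /imsetP [j _ cj] := Hc ord_max.
  exists (fun k => if k == j then (m k).+1 else m k) => v.
  rewrite permM Hm cj diag_genXE; apply/rowP => k; rewrite !mxE.
  case: eqP => [->|_] //.
  by rewrite mulrA -exprD mulnS addnC.
case=> m Hm.
have -> : s = (\prod_(j <- enum 'I_d) (diag_gen u j ^+ (e j * m j)))%g.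
  apply/permP => v; rewrite prod_diagE ?enum_uniq // Hm.
  by apply/rowP => k; rewrite !mxE mem_enum.
apply: group_prod => j _; rewrite expgM; apply: groupX.
by apply: mem_gen; apply: imset_f.
Qed.

Lemma memT (F : finFieldType) d (u : {unit F}) s :
  s \in diagT u <-> exists m : 'I_d -> nat, forall v, s v = \row_k (val u ^+ m k * v 0 k).
Proof.
have -> : diagT u = <<[set (diag_gen u j ^+ (fun _ => 1%N) j)%g | j : 'I_d]>>%g.
  by rewrite /diagT; congr <<_>>%g; apply: eq_imset => j; rewrite expg1.
apply: (iff_trans (memG _ _ _)); split=> [[m Hm]|[m Hm]]; exists m => v; rewrite Hm;
  by apply/rowP => k; rewrite !mxE mul1n.
Qed.

Lemma memH (F : finFieldType) d (u : {unit F}) (i : 'I_d) a s :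
  s \in diagT_mod u i a <-> exists m : 'I_d -> nat, forall v,
     s v = \row_k (val u ^+ ((if k == i then a else 1%N) * m k) * v 0 k).
Proof.
have -> : diagT_mod u i a =
   <<[set (diag_gen u j ^+ (fun k => if k == i then a else 1%N) j)%g | j : 'I_d]>>%g.
  by rewrite /diagT_mod; congr <<_>>%g; apply: eq_imset => j; case: eqP; rewrite ?expg1.
exact: memG.
Qed.

Lemma memTX (F : finFieldType) d (u : {unit F}) (X : {perm 'rV[F]_d}) s :
  s \in (diagT u :^ X)%g <-> exists m : 'I_d -> nat, forall v,
     s (X v) = X (\row_k (val u ^+ m k * v 0 k)).
Proof.
rewrite -[X in (_ :^ X)%g](invgK X) mem_conjgV; apply: (iff_trans (memT _ _)).
split=> [[m Hm]|[m Hm]]; exists m => v.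
  by rewrite -Hm conjgE invgK !permM permKV.
by rewrite conjgE invgK !permM Hm permK.
Qed.

Definition Xfun (F : finFieldType) d (i : 'I_d) (sg : F -> F) (v : 'rV[F]_d) : 'rV[F]_d :=
  \row_k (if k == i then sg (v 0 k) else v 0 k).

Lemma Xinj (F : finFieldType) d (i : 'I_d) (sg : F -> F) :
  injective sg -> injective (Xfun i sg).
Proof.
move=> si v w /rowP H; apply/rowP => k; have := H k; rewrite !mxE.
by case: eqP => // _; apply: si.
Qed.

Lemma general (F : finFieldType) d (u : {unit F}) (i : 'I_d) (a : nat) (sg : F -> F)
  (si : injective sg) :
  (forall q y, val u ^+ (a * q) * sg y = sg (val u ^+ (a * q) * y)) ->
  (forall M M', (forall y, val u ^+ M * sg y = sg (val u ^+ M' * y)) -> (a %| M)%N) ->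
  exists x : {perm 'rV[F]_d}, (diagT u :&: (diagT u :^ x))%g = diagT_mod u i a.
Proof.
move=> Hcomm Hkey; pose X := perm (@Xinj F d i sg si).
have XE v : X v = Xfun i sg v by rewrite permE.
exists X; apply/setP => s; rewrite inE; apply/andP/idP.
  case=> /memT [m Hm] /memTX [m' Hm'].
  have aM : (a %| m i)%N.
    apply: (Hkey _ (m' i)) => y.
    have := Hm' (\row_k (if k == i then y else 0)).
    move/rowP/(_ i); rewrite Hm !XE /Xfun !mxE eqxx.
    idtac.
    by [].

  apply/memH; exists (fun k => if k == i then (m i %/ a)%N else m k) => v.
  rewrite Hm; apply/rowP => k; rewrite !mxE.
  by case: eqP => [->|_]; rewrite ?mul1n // mulnC divnK.
case/memH => m Hm; split.
  by apply/memT; exists (fun k => ((if k == i then a else 1%N) * m k)%N).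
apply/memTX; exists (fun k => ((if k == i then a else 1%N) * m k)%N) => v.
rewrite Hm !XE; apply/rowP => k; rewrite !mxE.
case: eqP => [->|_]; rewrite ?mxE ?eqxx //.
Qed.

From mathcomp Require Import zify.

Section Ca.
Variables (F : finFieldType) (n a : nat) (c : F).
Hypotheses (prim : (n.-primitive_root c)%R) (n0 : (0 < n)%N) (an : (a %| n)%N).

Definition Ca (y : F) := [exists k : 'I_n, y == c ^+ (a * k)].

Lemma cnz : c != 0.
Proof.
apply/negP => /eqP c0; have := prim_expr_order prim; rewrite c0 expr0n.
by case: n n0 => // m _ /eqP; rewrite eq_sym oner_eq0.
Qed.

Lemma CaE j : Ca (c ^+ j) = (a %| j)%N.
Proof.
apply/existsP/idP.
  case=> k; rewrite (eq_prim_root_expr prim) => /eqP H.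
  by rewrite /dvdn -(modn_dvdm j an) H (modn_dvdm _ an) modnMr.
case/dvdnP => q ->; exists (Ordinal (ltn_pmod q n0)).
by rewrite (eq_prim_root_expr prim) /= mulnC modnMmr.
Qed.

Lemma Ca0 : ~~ Ca 0.
Proof.
apply/existsP => -[k /eqP H]; have := expf_neq0 (a * k) cnz.
by rewrite -H eqxx.
Qed.

Lemma Ca_pow y : Ca y -> exists k, y = c ^+ (a * k).
Proof. by case/existsP => k /eqP ->; exists k. Qed.

End Ca.

Lemma cong_dvd n x z : (x == x + z %[mod n])%N -> (n %| z)%N.
Proof. by rewrite -{1}[x]addn0 eqn_modDl eq_sym eqn_mod_dvd // subn0. Qed.

Lemma dvd_cong n a x y : (a %| n)%N -> (x == y %[mod n])%N -> (a %| x)%N = (a %| y)%N.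
Proof. by move=> an /eqP H; rewrite /dvdn -(modn_dvdm x an) H modn_dvdm. Qed.

Local Close Scope ring_scope.

Theorem lemma3p6 (p d : nat) (mu : {unit 'F_p}) (i : 'I_d) (a : nat) :
  prime p -> (3 <= p)%N -> (1 <= d)%N -> (7 <= p ^ d)%N ->
  ((p.-1).-primitive_root (val mu))%R ->
  (0 < a)%N -> (a %| p.-1)%N -> (p, a) != (5%N, 2%N) ->
  exists x : {perm 'rV['F_p]_d},
    (diagT mu :&: (diagT mu :^ x))%g = diagT_mod mu i a.
Proof.
move=> pp p3 d1 p7 prim a0 an pa.
set n := p.-1 in prim an.
have n0 : (0 < n)%N by rewrite /n; lia.
set c := val mu in prim *.
have cnz := cnz prim n0.
case: (eqVneq a n) => [ean | ann].
  apply: (@general _ _ mu i a (fun y => y + 1)%R).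
  - exact: addIr.
  - by move=> q y; rewrite ean exprM (prim_expr_order prim) expr1n !mul1r.
  - move=> M M' /(_ 0%R); rewrite mulr0 add0r mulr1 => /eqP.
    by rewrite -(prim_order_dvd prim) ean.
pose sg y := if Ca n a c y then (c ^+ a * y)%R else y.
have dva k : (a %| a * k)%N by apply: dvdn_mulr.
apply: (@general _ _ mu i a sg).
- move=> x y; rewrite /sg.
  case: (boolP (Ca n a c x)) => [/Ca_pow [k ->]| nx];
    case: (boolP (Ca n a c y)) => [/Ca_pow [l ->]| ny] //.
  + by apply: mulfI; apply: expf_neq0.
  + move=> H; move: ny; rewrite -H -exprD (CaE prim n0 an).
    by rewrite dvdn_add ?dvdnn.
  + move=> H; move: nx; rewrite H -exprD (CaE prim n0 an).
    by rewrite dvdn_add ?dvdnn.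
- move=> q y; rewrite /sg.
  case: (boolP (Ca n a c y)) => [/Ca_pow [k ->] | ny].
    rewrite -!exprD !(CaE prim n0 an) dvdn_add ?dva //.
    by rewrite addnCA.
  case: (boolP (Ca n a c (c ^+ (a * q) * y)%R)) => [/Ca_pow [k Hk] | _ //].
  exfalso; move/negP: ny; apply.
  have -> : y = (c ^+ (a * q * (n - 1)) * (c ^+ (a * q) * y))%R.
    rewrite mulrA -exprD -mulnSr subn1 prednK // mulnC exprM.
    by rewrite (prim_expr_order prim) expr1n mul1r.
  by rewrite Hk -exprD (CaE prim n0 an) dvdn_add // !dvdn_mulr.
move=> M M' key; apply/idPn => aM.
have sgE j : sg (c ^+ j)%R = (c ^+ (j + (if (a %| j)%N then a else 0%N)%N))%R.
  by rewrite /sg (CaE prim n0 an); case: ifP; rewrite ?addn0 // exprD mulrC.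
have keyc M2 : (forall y, c ^+ M * sg y = sg (c ^+ M2 * y))%R -> forall j,
   (M + (j + (if a %| j then a else 0)) ==
    M2 + j + (if a %| M2 + j then a else 0) %[mod n])%N.
  move=> k2 j; rewrite -(eq_prim_root_expr prim) exprD -sgE k2 -exprD sgE.
  by [].
have k0 := keyc _ key 0; rewrite dvdn0 add0n addn0 in k0.
have aM' : ~~ (a %| M').
  apply/negP => aM'; rewrite aM' eqn_modDr in k0.
  by move: aM; rewrite (dvd_cong an k0) aM'.
rewrite (negbTE aM') addn0 in k0.
have {key} key : (forall y, c ^+ M * sg y = sg (c ^+ (M + a) * y))%R.
  move: k0; rewrite -(eq_prim_root_expr prim) => /eqP ->; exact: key.
have a1 : a != 1.
  by apply/eqP => a1; move: aM; rewrite a1 dvd1n.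
have na : ~~ (n %| a).
  apply/negP => /(dvdn_leq a0) na; move/negP: ann; apply.
  by by rewrite eqn_leq na dvdn_leq.
have k1 := keyc _ key 1; rewrite dvdn1 (negbTE a1) addn0 in k1.
case: ifP k1 => h1 k1; last first.
  have : (M + 1 + a = M + a + 1 + 0)%N by lia.
  by move=> E; move: k1; rewrite -E => /cong_dvd; rewrite (negbTE na).
have : (M + a + 1 + a = M + 1 + a * 2)%N by lia.
move=> E; move: k1; rewrite E => /cong_dvd n2a.
case: (ltnP 2 a) => a3.
  have k2 := keyc _ key 2.
  move: k2.
  have -> : (a %| 2) = false.
    by apply/negP => h; have := dvdn_leq (ltn0Sn 1) h; rewrite leqNgt a3.
  have -> : (a %| M + a + 2) = false.
    apply/negP; have -> : (M + a + 2 = (M + a + 1) + 1)%N by lia.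
    by rewrite dvdn_addr // dvdn1 (negbTE a1).
  rewrite !addn0; have -> : (M + a + 2 = M + 2 + a)%N by lia.
  by move/cong_dvd; rewrite (negbTE na).
have a2 : a = 2 by lia.
move: n2a pa ann; rewrite a2 /= => n4.
have n4' : (n <= 4)%N by apply: dvdn_leq.
rewrite xpair_eqE eqxx andbT => p5 n2.
have n3 : n = 3.
  move: p5 n2 n4' p3; rewrite /n; move: (p) => p' /eqP p5 /eqP n2 n4' p3'.
  clear -p5 n2 n4' p3'; lia.
by move: n4; rewrite n3.
Qed.
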